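(* Let $G$ be a loopless multigraph, let $k \geq 1$ be an integer, and let $M$ be a maximal $k$-edge-colorable subgraph of $G$ (maximal with respect to inclusion of edge sets). Let $F = \{v \in V(G) : d_M(v) \leq k - \mu(v)\}$. Then for every $v \in V(G)$ with $d_M(v) < k$, we have $d_F(v) \leq d_M(v)$.
   Context: A proper $k$-edge-coloring of a loopless multigraph is a map $E(G)\to\{1,\dots,k\}$ giving distinct colors to any two distinct edges sharing at least one endpoint; a multigraph is $k$-edge-colorable if it has one. For vertices $v,w$, $\mu(v,w)=\mu_G(v,w)$ is the number of edges joining $v$ and $w$, and $\mu(v)=\mu_G(v)=\max_{w\in V(G)}\mu_G(v,w)$. For $M\subseteq E(G)$ (viewed as a spanning subgraph), $d_M(v)$ is the number of edges of $M$ incident to $v$. For $F\subseteq V(G)$, $d_F(v)=\sum_{w\in F}\mu_G(v,w)$. *)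

(* Defs.v *)
(* A finite loopless multigraph is given by a vertex finType V,
   an edge finType E and two endpoint maps src, dst : E -> V (edge e joins
   src e and dst e; orientation is irrelevant). Parallel edges = distinct
   elements of E with the same endpoints. *)
From mathcomp Require Import all_boot.
Set Implicit Arguments. Unset Strict Implicit. Unset Printing Implicit Defensive.

Section MG.
Variables (V E : finType) (src dst : E -> V).

Definition loopless : Prop := forall e : E, src e != dst e.

Definition incident (v : V) (e : E) : bool := (src e == v) || (dst e == v).

Definition adjacent_edges (e f : E) : bool := [exists v, incident v e && incident v f].

(* proper k-edge-coloring of the spanning subgraph with edge set M,
   colours {1..k} represented by 'I_k *)
Definition proper_edge_coloring (k : nat) (M : {set E}) (c : E -> 'I_k) : Prop :=
  forall e f, e \in M -> f \in M -> e != f -> adjacent_edges e f -> c e != c f.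

Definition k_edge_colorable (k : nat) (M : {set E}) : Prop :=
  exists c : E -> 'I_k, proper_edge_coloring M c.

Definition maximal_k_edge_colorable (k : nat) (M : {set E}) : Prop :=
  k_edge_colorable k M /\
  forall M' : {set E}, M \proper M' -> ~ k_edge_colorable k M'.

Definition mult (v w : V) : nat :=
  #|[set e : E | ((src e == v) && (dst e == w)) || ((src e == w) && (dst e == v))]|.

Definition mult_max (v : V) : nat := \max_(w : V) mult v w.

Definition degM (M : {set E}) (v : V) : nat := #|[set e in M | incident v e]|.

Definition degF (F : {set V}) (v : V) : nat := \sum_(w in F) mult v w.

End MG.

(* Main.v *)
Require Import Defs.
From mathcomp Require Import all_boot.
From Stdlib Require Import ClassicalEpsilon.
Set Implicit Arguments. Unset Strict Implicit. Unset Printing Implicit Defensive.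

Section Ends.
Variable T : finType.
Variable r : rel T.
Hypothesis symr : symmetric r.
Definition rD (D : {set T}) := [rel x y | (x \in D) && (y \in D) && r x y].
Definition ND (D : {set T}) x := [set y in D | r x y].

Lemma path_restr D v x p : path (rD D) x p -> v \notin x :: p -> path (rD (D :\ v)) x p.
Proof.
elim: p x => [//|y p IH] x /= /andP[/andP[/andP[xD yD] rxy] pp].
rewrite !in_cons !negb_or => /andP[vx /andP[vy vp]].
rewrite /= !inE xD yD rxy eq_sym vx eq_sym vy.
by apply: IH => //; rewrite in_cons negb_or vy.
Qed.

Lemma rD_ND D x y : rD D x y -> y \in ND D x.
Proof. by move=> /= /andP[/andP[xD yD] rxy]; rewrite inE yD rxy. Qed.
Lemma rD_NDs D x y : rD D x y -> x \in ND D y.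
Proof. by move=> /= /andP[/andP[xD yD] rxy]; rewrite inE symr xD rxy. Qed.

Lemma hpath D v t : connect (rD D) v t -> v != t ->
  exists u q, [/\ rD D v u, path (rD D) u q, last u q = t & uniq (v :: u :: q)].
Proof.
move=> /connectP [p pp ->] vt.
case: (shortenP pp) vt => p' pp' up' _.
case: p' pp' up' => [|u q] /=; first by rewrite eqxx.
move=> /andP[vu pq] uq _; exists u, q; split => //.
Qed.

Lemma ends n : forall D : {set T}, #|D| <= n -> forall v a b : T, v \in D -> a \in D -> b \in D ->
  v != a -> v != b -> a != b -> (forall x, x \in D -> #|ND D x| <= 2) ->
  #|ND D v| <= 1 -> #|ND D a| <= 1 -> #|ND D b| <= 1 ->
  connect (rD D) v a -> connect (rD D) v b -> False.
Proof.
elim: n => [|n IH] D cD v a b vD aD bD va vb ab h2 hv ha hb cva cvb.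
  by move: cD; rewrite leqn0 => /eqP/cards0_eq D0; move: vD; rewrite D0 inE.
have [u [q [vu pq lq uq]]] := hpath cva va.
have [u' [q' [vu' pq' lq' uq']]] := hpath cvb vb.
have uN := rD_ND vu.
have uN' := rD_ND vu'.
have eu : u' = u by move/card_le1_eqP: hv => /(_ u' u uN' uN).
subst u'.
have nt : forall t q1 t' q2, #|ND D t| <= 1 -> t' != t -> path (rD D) u q1 -> last u q1 = t ->
   path (rD D) u q2 -> last u q2 = t' -> uniq (v :: u :: q2) -> u != t.
  move=> t q1 t' q2 ht t't _ _ p2 l2 u2; apply/negP => /eqP ut; subst t.
  case: q2 p2 l2 u2 => [|w q2] /=; first by move=> _ e; move: t't; rewrite e eqxx.
  move=> /andP[uw _] _; rewrite !inE !negb_or => /andP[/andP[vu2 /andP[vw _]] _].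
  have vN := rD_NDs vu.
  have wN := rD_ND uw.
  by move/card_le1_eqP: ht => /(_ v w vN wN) vw1; move: vw; rewrite vw1 eqxx.
have ua : u != a by apply: (nt a q b q') => //; rewrite eq_sym.
have ub : u != b by apply: (nt b q' a q).
have uD : u \in D by move: vu => /= /andP[/andP[_ ->]].
have uv : u != v by move: (uq) => /= /andP[]; rewrite !inE negb_or eq_sym => /andP[].
refine (IH (D :\ v) _ u a b _ _ _ ua ub ab _ _ _ _ _ _).
- by move: cD; rewrite (cardsD1 v D) vD add1n ltnS.
- by rewrite !inE uv.
- by rewrite !inE eq_sym va.
- by rewrite !inE eq_sym vb.
- move=> x; rewrite !inE => /andP[_ xD]; apply: leq_trans (h2 x xD).
  by apply: subset_leq_card; apply/subsetP => y; rewrite !inE => /andP[/andP[_ ->] ->].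
- have vN := rD_NDs vu.
  have : #|ND D u| <= 2 := h2 u uD.
  rewrite (cardsD1 v (ND D u)) vN add1n ltnS => H; apply: leq_trans H.
  by apply: subset_leq_card; apply/subsetP => y; rewrite !inE => /andP[/andP[-> ->] ->].
- apply: leq_trans ha.
  by apply: subset_leq_card; apply/subsetP => y; rewrite !inE => /andP[/andP[_ ->] ->].
- apply: leq_trans hb.
  by apply: subset_leq_card; apply/subsetP => y; rewrite !inE => /andP[/andP[_ ->] ->].
- apply/connectP; exists q => //; apply: path_restr => //.
  by move: uq => /= /andP[].
- apply/connectP; exists q' => //; apply: path_restr => //.
  by move: uq' => /= /andP[].
Qed.
End Ends.

Section Main.
Variables (V E : finType) (src dst : E -> V) (k : nat).
Hypothesis Hloop : loopless src dst.
Variable M : {set E}.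
Hypothesis Hmax : forall e, e \notin M -> ~ k_edge_colorable src dst k (e |: M).
Variable v : V.

Local Notation inc := (incident src dst).
Local Notation proper := (@proper_edge_coloring V E src dst k).

Definition oth e := if src e == v then dst e else src e.

Lemma inc_oth e x : inc v e -> inc x e = (x == v) || (x == oth e).
Proof.
rewrite /incident /oth; case: (eqVneq (src e) v) => [->|sv] /=.
  by rewrite (eq_sym v x) (eq_sym (dst e)).
move=> /eqP dv; by rewrite dv orbC !(eq_sym x).
Qed.

Lemma oth_neq e : inc v e -> oth e != v.
Proof.
move: (Hloop e); rewrite /incident /oth; case: (eqVneq (src e) v) => [->|sv] /=.
  by move=> H _; rewrite eq_sym.
by move=> H /eqP dv; rewrite -dv.
Qed.

Lemma inc_v e : inc v e -> inc (oth e) e.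
Proof. by move=> ve; rewrite inc_oth // eqxx orbT. Qed.

Definition avail (c : E -> 'I_k) x g := [forall e in M, inc x e ==> (c e != g)].

Lemma availP c x g : reflect (forall e, e \in M -> inc x e -> c e != g) (avail c x g).
Proof.
apply: (iffP forall_inP) => H e eM; first by move=> xe; move: (H e eM); rewrite xe.
by apply/implyP; apply: H.
Qed.

Lemma col_uniq c x e f : proper M c -> e \in M -> f \in M -> inc x e -> inc x f ->
  c e = c f -> e = f.
Proof.
move=> cp eM fM xe xf cef; apply/eqP; apply: contraT => ef.
have : c e != c f by apply: cp => //; apply/existsP; exists x; rewrite xe xf.
by rewrite cef eqxx.
Qed.

Lemma proper_sub (N N' : {set E}) c : N \subset N' -> proper N' c -> proper N c.
Proof. by move=> /subsetP s cp e f eN fN; apply: cp; apply: s. Qed.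

Fixpoint fan (c : E -> 'I_k) (R : seq E) : Prop :=
  match R with
  | [::] => True
  | e :: R' => [/\ fan c R', e \notin R', inc v e &
                (e \notin M \/ exists2 h, h \in R' & avail c (oth h) (c e))]
  end.

Lemma fan_suffix c A B : fan c (A ++ B) -> fan c B.
Proof. by elim: A => [//|a A IH] /= [/IH]. Qed.

Lemma fan_inc c R g : fan c R -> g \in R -> inc v g.
Proof.
elim: R => [//|e R IH] /= [fR _ ve _]; rewrite in_cons => /orP[/eqP->//|]; exact: IH.
Qed.

Lemma fan_uniq c R : fan c R -> uniq R.
Proof. by elim: R => [//|e R IH] /= [/IH -> -> _ _]. Qed.

Lemma suffix_sub (x : E) L R1 g R2 : x :: L = R1 ++ g :: R2 -> {subset R2 <= L}.
Proof.
case: R1 => [|y R1'] /= [_ ->] z zR2 //.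
by rewrite mem_cat in_cons zR2 !orbT.
Qed.

Lemma fan_transfer c c' R : fan c R -> (forall g, g \in R -> c' g = c g) ->
  (forall R1 g R2 h, R = R1 ++ g :: R2 -> h \in R2 -> g \in M ->
     avail c (oth h) (c g) -> avail c' (oth h) (c g)) -> fan c' R.
Proof.
elim: R => [//|e R IH] /= [fR eR ve W] Hc Ha; split => //.
- apply: IH => // [g gR|R1 g R2 h eq hR2 gM hav]; first by apply: Hc; rewrite in_cons gR orbT.
  by apply: (Ha (e :: R1) g R2 h) => //; rewrite eq.
- case: (boolP (e \in M)) => eM; last by left.
  case: W => [|[h hR hav]]; first by rewrite eM.
  right; exists h => //.
  by rewrite Hc ?mem_head //; apply: (Ha [::] e R h).
Qed.

Definition recol (c : E -> 'I_k) e g := fun x => if x == e then g else c x.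

Lemma recol_proper c e g : proper M c -> inc v e -> avail c v g -> avail c (oth e) g ->
  proper (e |: M) (recol c e g).
Proof.
move=> cp ve /availP av /availP ao.
have key : forall f x, f \in M -> f != e -> inc x e -> inc x f -> g != c f.
  move=> f x fM fe xe xf; rewrite eq_sym; move: xe; rewrite inc_oth // => /orP[/eqP xv|/eqP xo].
    by apply: av => //; rewrite -xv.
  by apply: ao => //; rewrite -xo.
move=> f1 f2; rewrite !inE /recol => /orP[/eqP->|f1M] /orP[/eqP->|f2M] f12 /existsP[x /andP[x1 x2]].
- by rewrite eqxx in f12.
- rewrite eqxx; case: (eqVneq f2 e) => [e2|e2]; first by rewrite e2 eqxx in f12.
  exact: (key f2 x).
- rewrite eqxx; case: (eqVneq f1 e) => [e1|e1]; first by rewrite e1 eqxx in f12.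
  by rewrite eq_sym; exact: (key f1 x).
- case: (eqVneq f1 e) => [e1|e1]; case: (eqVneq f2 e) => [e2|e2].
  + by rewrite e1 e2 eqxx in f12.
  + by subst f1; exact: (key f2 x).
  + by subst f2; rewrite eq_sym; exact: (key f1 x).
  + by apply: cp => //; apply/existsP; exists x; rewrite x1 x2.
Qed.

Lemma recol_avail c e g x d : avail c x d -> d != g -> avail (recol c e g) x d.
Proof.
move=> /availP av dg; apply/availP => f fM xf; rewrite /recol.
by case: (eqVneq f e) => _; [rewrite eq_sym | apply: av].
Qed.

Lemma shift n : forall c R e g, size R < n -> proper M c -> fan c (e :: R) ->
  avail c (oth e) g -> avail c v g -> False.
Proof.
elim: n => [//|n IH] c R e g sR cp /= [fR eR ve W] ao av.
case: W => [eM|[h hR hav]].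
  apply: (Hmax eM); exists (recol c e g); exact: recol_proper.
case: (boolP (e \in M)) => eM; last first.
  by apply: (Hmax eM); exists (recol c e g); exact: recol_proper.
have gce : c e != g by move/availP: av => /(_ e eM ve).
have [A [B RAB]] : exists A B, R = A ++ h :: B.
  by case/splitPr: hR => A B; exists A, B.
subst R.
have cp' : proper M (recol c e g).
  by apply: proper_sub (recol_proper cp ve av ao); apply/subsetP => x xM; rewrite !inE xM orbT.
apply: (IH (recol c e g) B h (c e)) => //.
- by move: sR; rewrite size_cat /= addnS ltnS; apply: leq_trans; apply: leq_addl.
- have fB : fan c (h :: B) by apply: (fan_suffix fR).
  apply: (fan_transfer fB) => [x xB|R1 x R2 h' eq h'R2 xM hav'].
    rewrite /recol; case: (eqVneq x e) => // xe; move: eR; rewrite -xe mem_cat.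
    by rewrite xB orbT.
  apply: recol_avail => //.
  have xB : x \in h :: B by rewrite eq mem_cat mem_head orbT.
  have vx : inc v x := fan_inc fB xB.
  by move/availP: av => /(_ x xM vx); rewrite eq_sym.
- apply/availP => f fM xf; rewrite /recol; case: (eqVneq f e) => [fe|fe].
    by subst f; move/availP: hav => /(_ e eM xf); rewrite eqxx.
  by move/availP: hav; apply.
- apply/availP => f fM xf; rewrite /recol; case: (eqVneq f e) => [fe|fe]; first by rewrite eq_sym.
  by apply/negP => /eqP cf; move: fe; rewrite (col_uniq cp fM eM xf ve cf) eqxx.
Qed.

Lemma shift' c R e g : proper M c -> fan c (e :: R) ->
  avail c (oth e) g -> avail c v g -> False.
Proof. exact: (@shift (size R).+1 c R e g). Qed.


Definition joins e x y := ((src e == x) && (dst e == y)) || ((src e == y) && (dst e == x)).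

Lemma joins_inc e x y : joins e x y -> inc x e.
Proof. by rewrite /joins /incident => /orP[/andP[-> _]|/andP[_ ->]]; rewrite ?orbT. Qed.

Lemma joins_uniq e x y1 y2 : joins e x y1 -> joins e x y2 -> y1 = y2.
Proof.
rewrite /joins => /orP[/andP[/eqP s1 /eqP d1]|/andP[/eqP s1 /eqP d1]]
                   /orP[/andP[/eqP s2 /eqP d2]|/andP[/eqP s2 /eqP d2]]; congruence.
Qed.

Definition Hr (c : E -> 'I_k) a b :=
  [rel x y | [exists e in M, ((c e == a) || (c e == b)) && joins e x y]].

Lemma Hr_sym c a b : symmetric (Hr c a b).
Proof.
move=> x y; apply/existsP/existsP => [[e /andP[eM /andP[ce j]]]|[e /andP[eM /andP[ce j]]]];
  exists e; rewrite eM ce /=; move: j; rewrite /joins orbC; by [].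
Qed.

Definition swc a b (g : 'I_k) := if g == a then b else if g == b then a else g.

Lemma swcK a b : involutive (swc a b).
Proof.
move=> g; rewrite /swc; case: (eqVneq g a) => [->|ga] /=.
  by case: (eqVneq b a) => [->|]; rewrite ?eqxx.
case: (eqVneq g b) => [->|gb] /=; first by rewrite eqxx.
by rewrite (negbTE ga) (negbTE gb).
Qed.

Lemma swc_other a b g : g != a -> g != b -> swc a b g = g.
Proof. by move=> ga gb; rewrite /swc (negbTE ga) (negbTE gb). Qed.

Lemma swc_ab a b g : (swc a b g == a) || (swc a b g == b) = (g == a) || (g == b).
Proof.
rewrite /swc; case: (eqVneq g a) => [_|ga].
  by case: (eqVneq b a) => [->|_]; rewrite eqxx ?orbT.
case: (eqVneq g b) => [_|gb]; first by rewrite eqxx.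
by rewrite (negbTE ga) (negbTE gb).
Qed.

Definition swap (c : E -> 'I_k) a b (C : {set V}) :=
  fun e => if (e \in M) && (src e \in C) then swc a b (c e) else c e.

Section Swap.
Variables (c : E -> 'I_k) (a b : 'I_k) (C : {set V}).
Hypothesis cp : proper M c.
Hypothesis clC : forall e, e \in M -> (c e == a) || (c e == b) -> (src e \in C) = (dst e \in C).

Lemma cl_inc f x : f \in M -> (c f == a) || (c f == b) -> inc x f -> (x \in C) = (src f \in C).
Proof.
move=> fM fab; rewrite /incident => /orP[/eqP <-//|/eqP <-]; by rewrite (clC fM fab).
Qed.

Lemma swap_proper : proper M (swap c a b C).
Proof.
move=> f1 f2 f1M f2M f12 adj; have := cp f1M f2M f12 adj.
move: adj => /existsP[x /andP[x1 x2]].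
rewrite /swap f1M f2M /=.
have H : forall g1 g2, g1 \in M -> g2 \in M -> inc x g1 -> inc x g2 -> src g1 \in C ->
  src g2 \notin C -> swc a b (c g1) != c g2.
  move=> g1 g2 g1M g2M xg1 xg2 s1 s2.
  case: (boolP ((c g1 == a) || (c g1 == b))) => ab1; last first.
    rewrite negb_or in ab1; case/andP: ab1 => h1 h2; rewrite swc_other //.
    apply: (cp g1M g2M) => //; last by apply/existsP; exists x; rewrite xg1 xg2.
    by apply: contraNneq s2 => e; rewrite -e.
  have xC : x \in C by rewrite (cl_inc g1M ab1 xg1).
  case: (boolP ((c g2 == a) || (c g2 == b))) => ab2.
    by move: s2; rewrite -(cl_inc g2M ab2 xg2) xC.
  by apply: contraNneq ab2 => <-; rewrite swc_ab.
case: (boolP (src f1 \in C)) => s1; case: (boolP (src f2 \in C)) => s2 /= ne.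
- by apply: contraNneq ne => /(can_inj (swcK a b)) ->.
- exact: (H f1 f2).
- by rewrite eq_sym; apply: (H f2 f1) => //; rewrite eq_sym.
- exact: ne.
Qed.

Lemma swap_out x f : x \notin C -> f \in M -> inc x f -> swap c a b C f = c f.
Proof.
move=> xC fM xf; rewrite /swap fM /=; case: ifP => // sC.
case: (boolP ((c f == a) || (c f == b))) => ab.
  by move: xC; rewrite (cl_inc fM ab xf) sC.
by rewrite negb_or in ab; case/andP: ab => h1 h2; rewrite swc_other.
Qed.

Lemma swap_v g : v \notin C -> inc v g -> swap c a b C g = c g.
Proof.
move=> vC vg; case: (boolP (g \in M)) => gM; first exact: swap_out vC gM vg.
by rewrite /swap (negbTE gM).
Qed.

Lemma swap_avail_out x d : x \notin C -> avail c x d -> avail (swap c a b C) x d.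
Proof.
move=> xC /availP av; apply/availP => f fM xf; rewrite (swap_out xC fM xf); exact: av.
Qed.

Lemma swap_avail_other x d : d != a -> d != b -> avail c x d -> avail (swap c a b C) x d.
Proof.
move=> da db /availP av; apply/availP => f fM xf; rewrite /swap fM /=.
case: ifP => _; last exact: av.
apply: contraNneq (av f fM xf) => e; rewrite -(swcK a b (c f)) e swc_other //.
Qed.

Lemma swap_avail_in x : a != b -> x \in C -> avail c x b -> avail (swap c a b C) x a.
Proof.
move=> ab xC /availP av; apply/availP => f fM xf; rewrite /swap fM /=.
case: ifP => sC.
  rewrite /swc; case: (eqVneq (c f) a) => [_|fa]; first by rewrite eq_sym.
  case: (eqVneq (c f) b) => [fb|fb]; first by move: (av f fM xf); rewrite fb eqxx.
  exact: fa.
apply: contraFneq sC => fa; rewrite -(cl_inc fM _ xf) ?fa ?eqxx //.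
Qed.
End Swap.

Lemma compC c a b y :
  forall e, e \in M -> (c e == a) || (c e == b) ->
  (src e \in [set x | connect (Hr c a b) y x]) = (dst e \in [set x | connect (Hr c a b) y x]).
Proof.
move=> e eM ab; rewrite !inE.
have r1 : Hr c a b (src e) (dst e) by apply/existsP; exists e; rewrite eM ab /joins !eqxx.
have r2 : Hr c a b (dst e) (src e) by apply/existsP; exists e; rewrite eM ab /joins !eqxx orbT.
apply/idP/idP => H; apply: connect_trans H _; exact: connect1.
Qed.

Lemma Ncard1 c (x : V) (g : 'I_k) : proper M c ->
  #|[set y | [exists e in M, (c e == g) && joins e x y]]| <= 1.
Proof.
move=> cp; apply/card_le1_eqP => y1 y2; rewrite !inE.
move=> /existsP[e1 /andP[e1M /andP[/eqP c1 j1]]] /existsP[e2 /andP[e2M /andP[/eqP c2 j2]]].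
have ee : e1 = e2 by apply: (col_uniq cp e1M e2M (joins_inc j1) (joins_inc j2)); rewrite c1 c2.
by subst e2; rewrite (joins_uniq j1 j2).
Qed.

Lemma Nsub c (a b : 'I_k) (x : V) : [set y | Hr c a b x y] \subset
  [set y | [exists e in M, (c e == a) && joins e x y]] :|:
  [set y | [exists e in M, (c e == b) && joins e x y]].
Proof.
apply/subsetP => y; rewrite !inE => /existsP[e /andP[eM /andP[/orP[ca|cb] j]]].
  by apply/orP; left; apply/existsP; exists e; rewrite eM ca.
by apply/orP; right; apply/existsP; exists e; rewrite eM cb.
Qed.

Lemma Ncard2 c (a b : 'I_k) (x : V) : proper M c -> #|[set y | Hr c a b x y]| <= 2.
Proof.
move=> cp; apply: leq_trans (subset_leq_card (Nsub c a b x)) _.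
apply: leq_trans (leq_card_setU _ _) _.
by rewrite -[2]/(1 + 1); apply: leq_add; apply: Ncard1.
Qed.

Lemma Ncard_av c (a b : 'I_k) (x : V) g : proper M c -> (g == a) || (g == b) -> avail c x g ->
  #|[set y | Hr c a b x y]| <= 1.
Proof.
move=> cp gab /availP av.
have E0 : forall h, h == g -> [set y | [exists e in M, (c e == h) && joins e x y]] = set0.
  move=> h /eqP ->; apply/setP => y; rewrite !inE; apply/negbTE/negP => /existsP[e /andP[eM /andP[ce j]]].
  by move: (av e eM (joins_inc j)); rewrite ce.
apply: leq_trans (subset_leq_card (Nsub c a b x)) _.
case/orP: gab => /eqP gab; subst g.
  by rewrite E0 // set0U; apply: Ncard1.
by rewrite (E0 b) // setU0; apply: Ncard1.
Qed.

Lemma no3 c (a b : 'I_k) (x y z : V) : proper M c -> x != y -> x != z -> y != z ->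
  (exists2 g, (g == a) || (g == b) & avail c x g) ->
  (exists2 g, (g == a) || (g == b) & avail c y g) ->
  (exists2 g, (g == a) || (g == b) & avail c z g) ->
  connect (Hr c a b) x y -> connect (Hr c a b) x z -> False.
Proof.
move=> cp xy xz yz [gx gx1 gx2] [gy gy1 gy2] [gz gz1 gz2] cxy cxz.
have eqr : rD (Hr c a b) [set: V] =2 Hr c a b by move=> p q; rewrite /rD /= !in_setT.
have eN : forall p, ND (Hr c a b) [set: V] p = [set q | Hr c a b p q].
  by move=> p; apply/setP => q; rewrite !inE.
apply: (@ends _ (Hr c a b) (@Hr_sym c a b) #|[set: V]| [set: V] (leqnn _) x y z) => //;
  rewrite ?in_setT ?eN ?(eq_connect eqr) //.
- by move=> p _; rewrite eN; apply: Ncard2 cp.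
- exact: (Ncard_av cp gx1 gx2).
- exact: (Ncard_av cp gy1 gy2).
- exact: (Ncard_av cp gz1 gz2).
Qed.

Definition Good c (R : seq E) := forall g1 g2 b, g1 \in R -> g2 \in R -> oth g1 != oth g2 ->
  avail c (oth g1) b -> avail c (oth g2) b -> False.

Lemma last_occ (P : pred E) (R : seq E) f : f \in R -> P f ->
  exists A f' B, [/\ R = A ++ f' :: B, P f' & all (predC P) B].
Proof.
elim: R f => [//|x R IH] f; rewrite in_cons => fxR Pf.
case: (boolP (has P R)) => hP.
  case/hasP: hP => y yR Py; have [A [f' [B [-> Pf' aB]]]] := IH y yR Py.
  by exists (x :: A), f', B.
exists [::], x, R; split => //; last by rewrite all_predC.
case/orP: fxR => [/eqP <-//|fR]; by case/negP: hP; apply/hasP; exists f.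
Qed.

Lemma good c a : proper M c -> avail c v a -> forall R, fan c R -> Good c R.
Proof.
move=> cp av; elim => [|e R IH] /=; first by move=> _ g1.
move=> [fR eR ve W].
have GR := IH fR.
have key : forall f b, f \in R -> oth f != oth e -> avail c (oth f) b -> avail c (oth e) b -> False.
  move=> f b fR' ne avf ave.
  have cs := sym_connect_sym (Hr_sym c a b).
  have [A [f' [B [RAB /eqP of' aB]]]] := @last_occ (fun g => oth g == oth f) R f fR' (eqxx _).
  have fB : fan c (f' :: B) by apply: (@fan_suffix c A); rewrite -RAB.
  have f'R : f' \in R by rewrite RAB mem_cat mem_head orbT.
  have nvb : ~~ avail c v b.
    by apply/negP => vb; apply: (shift' cp fB _ vb); rewrite of'.
  have ba : b != a by apply: contraNneq nvb => ->.
  have ab : a != b by rewrite eq_sym.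
  have dvj : v != oth f by rewrite eq_sym oth_neq // (fan_inc fR fR').
  have dvp : v != oth e by rewrite eq_sym oth_neq.
  have n3 := @no3 c a b v (oth f) (oth e) cp dvj dvp ne.
  have ex1 : exists2 g, (g == a) || (g == b) & avail c v g by exists a; rewrite ?eqxx.
  have ex2 : exists2 g, (g == a) || (g == b) & avail c (oth f) g by exists b; rewrite ?eqxx ?orbT.
  have ex3 : exists2 g, (g == a) || (g == b) & avail c (oth e) g by exists b; rewrite ?eqxx ?orbT.
  case: (boolP (connect (Hr c a b) v (oth f))) => cj.
  - have ncp : ~~ connect (Hr c a b) v (oth e) by apply/negP => cp'; exact: n3 ex1 ex2 ex3 cj cp'.
    pose C := [set x | connect (Hr c a b) (oth e) x].
    have clC : forall e0, e0 \in M -> (c e0 == a) || (c e0 == b) -> (src e0 \in C) = (dst e0 \in C).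
      move=> e0; exact: (@compC c a b (oth e) e0).
    have vC : v \notin C by rewrite inE cs.
    have jC : oth f \notin C.
      rewrite inE; apply/negP => h; move/negP: ncp; apply; apply: connect_trans cj _; by rewrite cs.
    have eC : oth e \in C by rewrite inE connect0.
    have cp' := swap_proper cp clC.
    apply: (shift' cp' (R := R) (e := e) (g := a)).
    + apply: (@fan_transfer c) => /=; [by split | |].
      * move=> g gR; apply: (swap_v clC vC); apply: (@fan_inc c (e :: R)) => //=.
      * move=> R1 g R2 h eq hR2 gM hav.
        have hR := suffix_sub eq hR2.
        have gR : g \in e :: R by rewrite eq mem_cat mem_head orbT.
        have vg : inc v g by apply: (@fan_inc c (e :: R)) => //=.
        have cga : c g != a by move/availP: av => /(_ g gM vg).
        case: (eqVneq (c g) b) => cgb.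
          have ohj : oth h = oth f.
            apply/eqP; apply: contraT => nh; exfalso; apply: (GR h f b hR fR' nh) => //; by rewrite -cgb.
          by apply: (swap_avail_out clC) => //; rewrite ohj.
        exact: swap_avail_other.
    + exact: (swap_avail_in clC ab eC ave).
    + exact: (swap_avail_out clC vC av).
  - pose C := [set x | connect (Hr c a b) (oth f) x].
    have clC : forall e0, e0 \in M -> (c e0 == a) || (c e0 == b) -> (src e0 \in C) = (dst e0 \in C).
      move=> e0; exact: (@compC c a b (oth f) e0).
    have vC : v \notin C by rewrite inE cs.
    have jC : oth f \in C by rewrite inE connect0.
    have cp' := swap_proper cp clC.
    apply: (shift' cp' (R := B) (e := f') (g := a)).
    + apply: (fan_transfer fB).
      * move=> g gR; apply: (swap_v clC vC); exact: (fan_inc fB gR).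
      * move=> R1 g R2 h eq hR2 gM hav.
        have hB := suffix_sub eq hR2.
        have gR : g \in f' :: B by rewrite eq mem_cat mem_head orbT.
        have vg : inc v g by apply: (fan_inc fB gR).
        have cga : c g != a by move/availP: av => /(_ g gM vg).
        case: (eqVneq (c g) b) => cgb.
          have nh : oth h != oth f by move/allP: aB => /(_ h hB).
          have hR : h \in R by rewrite RAB mem_cat in_cons hB !orbT.
          exfalso; apply: (GR h f b hR fR' nh) => //; by rewrite -cgb.
        exact: swap_avail_other.
    + by rewrite of'; exact: (swap_avail_in clC ab jC avf).
    + exact: (swap_avail_out clC vC av).
move=> g1 g2 b; rewrite !in_cons => /orP[/eqP->|g1R] /orP[/eqP->|g2R].
- by rewrite eqxx.
- by move=> ne a1 a2; apply: (key g2 b g2R) => //; rewrite eq_sym.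
- by move=> ne a1 a2; apply: (key g1 b g1R).
- exact: GR.
Qed.

Lemma fan_merge c R1 R2 : fan c R1 -> fan c R2 -> fan c ([seq g <- R1 | g \notin R2] ++ R2).
Proof.
elim: R1 => [//|g R1 IH] /= [f1 gR1 vg W] f2.
case: (boolP (g \in R2)) => gR2 /=; first exact: IH.
split => //; first exact: IH.
- by rewrite mem_cat mem_filter (negbTE gR2) (negbTE gR1).
- case: W => [W|[h hR hav]]; [by left|right]; exists h => //.
  by rewrite mem_cat mem_filter; case: (h \in R2); rewrite ?orbT ?hR.
Qed.

Definition pb (P : Prop) : bool := if excluded_middle_informative P then true else false.
Lemma pbP P : reflect P (pb P).
Proof. by rewrite /pb; case: excluded_middle_informative => H; constructor. Qed.

Lemma card_sum (T : finType) (P : pred T) : #|[set x | P x]| = \sum_x P x.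
Proof. by rewrite -sum1_card big_mkcond; apply: eq_bigr => x _; rewrite inE; case: (P x). Qed.

Lemma mult_eq w : [set e | ((src e == v) && (dst e == w)) || ((src e == w) && (dst e == v))]
   = [set e | inc v e && (oth e == w)].
Proof.
apply/setP => e; rewrite !inE /incident /oth.
case: (eqVneq (src e) v) => [sv|sv] /=.
  have := Hloop e; rewrite sv => dv; by rewrite (eq_sym (dst e) v) (negbTE dv) andbF orbF.
by rewrite andbC.
Qed.

Lemma cnt (X : {set V}) : \sum_(w in X) mult src dst v w = \sum_e (inc v e && (oth e \in X)).
Proof.
rewrite /mult; under eq_bigr => w _ do rewrite mult_eq card_sum.
rewrite exchange_big /=; apply: eq_bigr => e _.
case: (inc v e) => /=; last by rewrite big1.
rewrite (eq_bigr (fun w => (w == oth e) : nat)); last by move=> w _; rewrite eq_sym.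
rewrite big_mkcond /= (bigD1 (oth e)) //= eqxx big1 ?addn0; first by case: (oth e \in X).
by move=> w /negbTE ->; case: (w \in X).
Qed.

Lemma final c (F : {set V}) : proper M c -> (exists a, avail c v a) ->
  (forall y, y \in F -> mult src dst v y <= #|[set g | avail c y g]|) ->
  \sum_(w in F) mult src dst v w <= degM src dst M v.
Proof.
move=> cp [a av] HF.
pose S := [set y | pb (exists e R, [/\ fan c (e :: R), all (fun g => oth g \in F) (e :: R) & oth e = y])].
have S_F : forall y, y \in S -> y \in F.
  by move=> y; rewrite inE => /pbP [e [R [_ /= /andP[eF _] <-]]].
have S_av : forall y g, y \in S -> avail c y g -> ~~ avail c v g.
  move=> y g; rewrite inE => /pbP [e [R [fe _ <-]]] ay; apply/negP => vg.
  exact: (shift' cp fe ay vg).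
have S_disj : forall y1 y2 g, y1 \in S -> y2 \in S -> y1 != y2 -> avail c y1 g -> avail c y2 g -> False.
  move=> y1 y2 g; rewrite !inE => /pbP [e1 [R1 [f1 _ <-]]] /pbP [e2 [R2 [f2 _ <-]]] ne a1 a2.
  have fm := fan_merge f1 f2.
  have G := good cp av fm; apply: (G e1 e2 g _ _ ne a1 a2).
    case: (boolP (e1 \in e2 :: R2)) => h; rewrite mem_cat ?h ?orbT //.
    by rewrite mem_filter h mem_head.
  by rewrite mem_cat mem_head orbT.
have S_root : forall e, inc v e -> e \notin M -> oth e \in F -> oth e \in S.
  move=> e ve eM eF; rewrite inE; apply/pbP; exists e, [::]; split => //=; last by rewrite eF.
  by split => //; left.
have S_clos : forall g y, g \in M -> inc v g -> oth g \in F -> y \in S -> avail c y (c g) -> oth g \in S.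
  move=> g y gM vg gF; rewrite !inE => /pbP [e [R [fe aF ey]]] ayg; apply/pbP.
  case: (boolP (g \in e :: R)) => gin.
    have [A [B eq]] : exists A B, e :: R = A ++ g :: B.
      by case/splitPr: gin => A B; exists A, B.
    exists g, B; split => //.
    + by apply: (@fan_suffix c A); rewrite -eq.
    + by move: aF; rewrite eq all_cat => /andP[_].
  exists g, (e :: R); split => //=.
  + by split => //; right; exists e; rewrite ?mem_head ?ey.
  + by rewrite gF; exact: aF.
pose T' := [set e | (e \in M) && inc v e && ((oth e \in S) || (oth e \notin F))].
have step1 : \sum_(y in S) #|[set g | avail c y g]| <= #|T'|.
  under eq_bigr => y _ do rewrite card_sum.
  rewrite exchange_big /=.
  apply: leq_trans (leq_imset_card c T'); rewrite -sum1_card [X in _ <= X]big_mkcond /=.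
  apply: leq_sum => g _.
  have -> : \sum_(y in S) avail c y g = #|[set y | (y \in S) && avail c y g]|.
    by rewrite card_sum big_mkcond; apply: eq_bigr => y _; case: (y \in S).
  case: (boolP ([set y | (y \in S) && avail c y g] == set0)) => [/eqP->|ne]; first by rewrite cards0.
  case/set0Pn: ne => y0; rewrite inE => /andP[y0S y0g].
  have gim : g \in c @: T'.
    have := S_av _ _ y0S y0g; rewrite /avail negb_forall_in => /exists_inP [e eM].
    rewrite negb_imply negbK => /andP[ve /eqP ce].
    apply/imsetP; exists e => //; rewrite inE eM ve /=.
    case: (boolP (oth e \in F)) => eF; rewrite ?orbT //.
    by rewrite (S_clos e y0 eM ve eF y0S) // ce.
  rewrite gim; apply/card_le1_eqP => y1 y2; rewrite inE => /andP[y1S a1]; rewrite inE => /andP[y2S a2].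
  by apply/eqP; apply: contraT => ne; exfalso; apply: (S_disj y2 y1 g y2S y1S ne a2 a1).
have step2 : \sum_(y in S) mult src dst v y <= \sum_(y in S) #|[set g | avail c y g]|.
  by apply: leq_sum => y yS; apply: HF; apply: S_F.
rewrite cnt /degM card_sum.
apply: (@leq_trans (\sum_e ((inc v e && (oth e \in S)) + ((e \in M) && inc v e && (oth e \in F) && (oth e \notin S))))).
  apply: leq_sum => e _.
  case: (boolP (inc v e)) => ve /=; last by [].
  case: (boolP (oth e \in S)) => eS /=; first by case: (oth e \in F).
  rewrite !andbT; case: (boolP (oth e \in F)) => eF; rewrite ?andbF //.
  case: (boolP (e \in M)) => eM //.
  by move: eS; rewrite (S_root e ve eM eF).
rewrite big_split /= -cnt.
apply: (@leq_trans (#|T'| + \sum_e ((e \in M) && inc v e && (oth e \in F) && (oth e \notin S)))).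
  by rewrite leq_add2r; apply: leq_trans step2 step1.
rewrite card_sum -big_split /=; apply: leq_sum => e _.
case: (boolP (e \in M)) => eM /=; last by [].
case: (boolP (inc v e)) => ve /=; last by [].
case: (boolP (oth e \in S)) => eS /=.
  by rewrite (S_F _ eS) andbF.
by case: (oth e \in F).
Qed.

End Main.

Theorem mainTheorem1 (V E : finType) (src dst : E -> V) (k : nat)
  (Hloop : loopless src dst) (Hk : 1 <= k) (M : {set E})
  (HM : maximal_k_edge_colorable src dst k M) :
  let F := [set v : V | degM src dst M v + mult_max src dst v <= k] in
  forall v : V, degM src dst M v < k -> degF src dst F v <= degM src dst M v.
Proof.
move=> F v0 dv.
case: HM => [[c cp] Hm].
have Hmax : forall e, e \notin M -> ~ k_edge_colorable src dst k (e |: M).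
  by move=> e eM; apply: Hm; apply: properUr; rewrite sub1set.
have mcard : forall y, k - degM src dst M y <= #|[set g | avail src dst M c y g]|.
  move=> y; pose U := c @: [set e in M | incident src dst y e].
  have hU : #|U| <= degM src dst M y by apply: leq_imset_card.
  have h1 : #|U| + #|~: U| = k by rewrite cardsC card_ord.
  have hUk : #|U| <= k by apply: leq_trans (leq_addr #|~: U| #|U|) _; rewrite h1.
  have hC : #|~: U| = k - #|U| by apply/eqP; rewrite -(eqn_add2l #|U|) h1 subnKC.
  apply: (@leq_trans #|~: U|).
    by rewrite hC; apply: leq_sub2l.
  apply: subset_leq_card; apply/subsetP => g; rewrite !inE => gU.
  apply/forall_inP => e eM; apply/implyP => ye; apply: contraNneq gU => <-.
  by apply/imsetP; exists e => //; rewrite inE eM ye.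
apply: (@final V E src dst k Hloop M Hmax v0 c F cp).
- have : 0 < #|[set g | avail src dst M c v0 g]|.
    by apply: leq_trans (mcard v0); rewrite subn_gt0.
  by case/card_gt0P => a; rewrite inE => av; exists a.
- move=> y; rewrite inE => yF.
  apply: leq_trans (mcard y).
  have : mult src dst v0 y <= mult_max src dst y.
    have hb := @leq_bigmax V (fun w => mult src dst y w) v0; rewrite /mult_max; apply: leq_trans hb.
    rewrite /mult; apply: eq_leq; apply: eq_card => e; rewrite !inE orbC; by [].
  move=> H; rewrite leq_subRL; last by apply: leq_trans (leq_addr _ _) yF.
  by apply: leq_trans yF; rewrite leq_add2l.
Qed.
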